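(* Let $\boldsymbol\Phi$ be the symmetric adjacency matrix of a connected undirected graph $G=(V,\mathcal E)$ on $n$ nodes with nonnegative edge weights and no self-loops, with degree matrix $\mathbf D$ and Laplacian $\mathbf L=\mathbf D-\boldsymbol\Phi$. Consider the natural random walk on $G$, i.e. the Markov chain with transition matrix $\mathbf P=\mathbf D^{-1}\boldsymbol\Phi$. Then there exists an oriented edge-incidence matrix $\mathbf F$ of $G$ such that for every edge $(j,k)\in\mathcal E$, $$\mathbf F^\dagger_{\mathcal E(j,k)\cdot}=\sqrt{\Phi_{jk}}\,(\mathbf L^\dagger_{\cdot j}-\mathbf L^\dagger_{\cdot k})=\frac{\sqrt{\Phi_{jk}}}{2\operatorname{vol}(G)}\Big(\mathbf I_n-\frac{\mathbf 1_n\mathbf 1_n^\top}{n}\Big)(\mathbf C_{\cdot k}-\mathbf C_{\cdot j}),$$ where $\operatorname{vol}(G)=\operatorname{trace}(\mathbf D)$ and $\mathbf C\in\mathbb R^{n\times n}_{\ge0}$ is the matrix of commute times, $C_{ij}=H_{ij}+H_{ji}$, with $H_{ij}$ the expected time for the random walk started at node $i$ to reach node $j$.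
   Context: An oriented edge-incidence matrix $\mathbf F\in\mathbb R^{n\times|\mathcal E|}$ has, for each edge between nodes $j$ and $k$ with column index $\mathcal E(j,k)$, exactly two nonzero entries $\mathbf F_{j,\mathcal E(j,k)}=-\mathbf F_{k,\mathcal E(j,k)}=\sqrt{\Phi_{jk}}$. $\mathbf F^\dagger$ and $\mathbf L^\dagger$ denote Moore–Penrose pseudoinverses; $\mathbf F^\dagger_{\mathcal E(j,k)\cdot}$ is the row of $\mathbf F^\dagger\in\mathbb R^{|\mathcal E|\times n}$ indexed by edge $\mathcal E(j,k)$, viewed as a vector in $\mathbb R^n$. $D_{ii}=\sum_j\Phi_{ij}$. *)

(* Defs.v *)
From HB Require Import structures.
From mathcomp Require Import all_boot all_order all_algebra.
From mathcomp Require Import all_classical all_reals ereal sequences.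
Set Implicit Arguments. Unset Strict Implicit. Unset Printing Implicit Defensive.
Import Order.TTheory GRing.Theory Num.Theory.
Local Open Scope ring_scope.

Section Defs.
Variable R : realType.

Definition is_MP_inverse m p (A : 'M[R]_(m, p)) (X : 'M[R]_(p, m)) : Prop :=
  [/\ A *m X *m A = A, X *m A *m X = X,
      (A *m X)^T = A *m X & (X *m A)^T = X *m A].

(* The Moore--Penrose pseudoinverse (it exists and is unique over the reals). *)
Definition mppinv m p (A : 'M[R]_(m, p)) : 'M[R]_(p, m) :=
  xget 0 [set X | is_MP_inverse A X]%classic.

Variable n : nat.
Implicit Type Phi : 'M[R]_n.

Definition adjacent Phi : rel 'I_n := fun i j => 0 < Phi i j.
Definition connected_graph Phi : Prop := forall i j, connect (adjacent Phi) i j.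

Definition degmx Phi : 'M[R]_n := diag_mx (\row_i \sum_j Phi i j).
Definition vol Phi : R := \tr (degmx Phi).
Definition laplacian Phi : 'M[R]_n := degmx Phi - Phi.
Definition transmx Phi : 'M[R]_n := invmx (degmx Phi) *m Phi.

(* P_i(T_j > t) where T_j = min {t >= 0 | X_t = j}, X_0 = i:
   probability that X_0, ..., X_t all avoid j, i.e. (if i <> j) the sum over
   j-avoiding paths i = x_0, x_1, ..., x_t of the products of transition
   probabilities, which is ((P with column j killed)^t 1)_i. *)
Definition hit_tail (P : 'M[R]_n) (i j : 'I_n) (t : nat) : R :=
  if i == j then 0 else
  (iter t (mulmx (\matrix_(a, b) if b == j then 0 else P a b))
          (const_mx 1 : 'cV[R]_n)) i ord0.

(* expected hitting time E_i[T_j] = sum_{t >= 0} P_i(T_j > t), in \bar R *)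
Definition hitting_time (P : 'M[R]_n) (i j : 'I_n) : \bar R :=
  (\sum_(0 <= t <oo) (hit_tail P i j t)%:E)%E.

Definition commute_mx Phi : 'M[R]_n :=
  \matrix_(i, j) fine (hitting_time (transmx Phi) i j + hitting_time (transmx Phi) j i)%E.

(* e enumerates the edges with an orientation: column c of F corresponds to
   the oriented edge (e c).1 -> (e c).2; every edge appears exactly once. *)
Definition edge_enum m Phi (e : 'I_m -> 'I_n * 'I_n) : Prop :=
  (forall c, 0 < Phi (e c).1 (e c).2) /\
  (forall j k, 0 < Phi j k -> exists! c, e c = (j, k) \/ e c = (k, j)).

Definition oriented_incidence m Phi (e : 'I_m -> 'I_n * 'I_n) (F : 'M[R]_(n, m))
  : Prop :=
  edge_enum Phi e /\
  forall i c, F i c =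
    if i == (e c).1 then Num.sqrt (Phi (e c).1 (e c).2)
    else if i == (e c).2 then - Num.sqrt (Phi (e c).1 (e c).2) else 0.

End Defs.

(* Main.v *)
Require Import Defs.
From HB Require Import structures.
From mathcomp Require Import all_boot all_order all_algebra.
From mathcomp Require Import all_classical all_reals ereal sequences.
From mathcomp Require Import topology normedtype.
From mathcomp Require Import ring lra.
Import Order.TTheory GRing.Theory Num.Theory.
Import numFieldNormedType.Exports.
Set Implicit Arguments. Unset Strict Implicit. Unset Printing Implicit Defensive.
Local Open Scope ring_scope.
Local Open Scope classical_set_scope.

Section Hit.
Variables (R : realType) (n : nat) (Q : 'M[R]_n) (j : 'I_n) (u : 'cV[R]_n).
Hypothesis Qge0 : forall a b, 0 <= Q a b.
Hypothesis Qj0 : forall a, Q a j = 0.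
Hypothesis uge0 : forall a, 0 <= u a ord0.
Hypothesis ueq : forall i, i != j -> u i ord0 = 1 + (Q *m u) i ord0.

Let v t := iter t (mulmx Q) (const_mx 1 : 'cV[R]_n).
Let r t := iter t (mulmx Q) u.
Let S T := \sum_(t < T) v t.

Lemma iter_ge0 (x : 'cV[R]_n) t : (forall a, 0 <= x a ord0) ->
  forall a, 0 <= (iter t (mulmx Q) x) a ord0.
Proof.
move=> hx; elim: t => [|t IH] a //=.
rewrite mxE; apply: sumr_ge0 => b _; exact: mulr_ge0.
Qed.

Lemma iter_le (x y : 'cV[R]_n) t : (forall a, x a ord0 <= y a ord0) ->
  forall a, (iter t (mulmx Q) x) a ord0 <= (iter t (mulmx Q) y) a ord0.
Proof.
move=> hx; elim: t => [|t IH] a //=.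
rewrite !mxE; apply: ler_sum => b _; exact: ler_wpM2l.
Qed.

Lemma S_rec T : S T.+1 = const_mx 1 + Q *m S T.
Proof.
rewrite /S big_ord_recl /= mulmx_sumr; congr (_ + _).
Qed.

Lemma uSr T i : i != j -> u i ord0 - S T i ord0 = r T i ord0.
Proof.
elim: T i => [|T IH] i ij.
  by rewrite /S big_ord0 mxE subr0.
rewrite S_rec /= mxE ueq // mxE [const_mx 1 i ord0]mxE opprD addrACA subrr add0r.
rewrite !mxE -sumrB; apply: eq_bigr => a _.
case: (eqVneq a j) => [->|aj]; first by rewrite Qj0 !mul0r subrr.
by rewrite -mulrBr IH.
Qed.

Lemma hit_series i : i != j ->
  (\sum_(0 <= t <oo) ((v t) i ord0)%:E)%E = (u i ord0)%:E.
Proof.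
move=> ij.
have vge0 t a : 0 <= v t a ord0 by apply: iter_ge0 => b; rewrite mxE.
have rge0 t a : 0 <= r t a ord0 by apply: iter_ge0.
have pE T : \sum_(0 <= t < T) v t i ord0 = S T i ord0.
  by rewrite /S summxE big_mkord.
have cvp : cvgn (series (fun t => v t i ord0)).
  apply: nondecreasing_is_cvgn.
    by apply: nondecreasing_series => k _ _; exact: vge0.
  exists (u i ord0) => _ [T _ <-].
  rewrite /series /= pE -subr_ge0 uSr //.
have v0 := cvg_series_cvg_0 cvp.
set K := \sum_a u a ord0.
have Kge : forall a, u a ord0 <= K.
  move=> a; rewrite /K (bigD1 a) //= lerDl; apply: sumr_ge0 => b _; exact: uge0.
have viter T : iter T (mulmx Q) (K *: (const_mx 1 : 'cV[R]_n)) = K *: v T.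
  elim: T => [|T IH] //=.
  by rewrite IH scalemxAr.
have rle T a : r T a ord0 <= K * v T a ord0.
  have -> : K * v T a ord0 = (K *: v T) a ord0 by rewrite mxE.
  rewrite -viter.
  by apply: iter_le => b; rewrite !mxE mulr1.
have r0 : (fun T => r T i ord0) @ \oo --> (0:R).
  apply: (@squeeze_cvgr _ _ _ _ (fun _ => 0) (fun T => K * v T i ord0)).
    by near=> T; rewrite rge0 rle.
    exact: cvg_cst.
  rewrite -(mulr0 K); apply: cvgMr; exact: v0.
have Sc : (fun T => S T i ord0) @ \oo --> u i ord0.
  have -> : (fun T => S T i ord0) = (fun T => u i ord0 - r T i ord0).
    by apply/funext => T; rewrite -uSr // opprB addrC subrK.
  rewrite -[X in _ --> X]subr0; apply: cvgB => //; exact: cvg_cst.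
have -> : (fun T => (\sum_(0 <= t < T) ((v t) i ord0)%:E)%E) = EFin \o (fun T => S T i ord0).
  by apply/funext => T /=; rewrite -pE sumEFin.
rewrite EFin_lim; last by apply/cvg_ex; exists (u i ord0).
by rewrite (cvg_lim _ Sc).
Unshelve. all: by end_near.
Qed.
End Hit.

Section MP.
Variable R : realType.
Lemma MP_unique m p (A : 'M[R]_(m, p)) X Y :
  is_MP_inverse A X -> is_MP_inverse A Y -> X = Y.
Proof.
move=> [h1 h2 h3 h4] [k1 k2 k3 k4].
have eA1 : A^T = A^T *m (A *m Y) by rewrite -{1}k1 trmx_mul k3.
have eA2 : A^T = (X *m A) *m A^T by rewrite -{1}h1 -mulmxA trmx_mul h4.
have eX : X = X *m A *m Y.
  transitivity (X *m (A *m X)^T); first by rewrite h3 mulmxA h2.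
  rewrite trmx_mul mulmxA eA1 !mulmxA -[X *m X^T *m A^T]mulmxA -trmx_mul h3.
  by rewrite !mulmxA h2.
have eY : Y = X *m A *m Y.
  transitivity ((Y *m A)^T *m Y); first by rewrite k4 k2.
  rewrite trmx_mul eA2 -!mulmxA [A^T *m (Y^T *m Y)]mulmxA -trmx_mul k4.
  by rewrite k2 mulmxA.
by rewrite eY -eX.
Qed.
End MP.

Lemma mppinvE (R : realType) m p (A : 'M[R]_(m, p)) X :
  is_MP_inverse A X -> mppinv A = X.
Proof.
move=> hX; apply: (MP_unique _ hX).
by have := @xgetI _ 0 [set X | is_MP_inverse A X]%classic X hX.
Qed.

Lemma sum_delta (R : realType) n (a : 'I_n) (F : 'I_n -> R) :
  \sum_b (a == b)%:R * F b = F a.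
Proof.
rewrite (bigD1 a) //= eqxx mul1r big1 ?addr0 // => b ba.
by rewrite eq_sym (negPf ba) mul0r.
Qed.

Lemma sum_delta' (R : realType) n (a : 'I_n) (F : 'I_n -> R) :
  \sum_b (b == a)%:R * F b = F a.
Proof.
rewrite (bigD1 a) //= eqxx mul1r big1 ?addr0 // => b ba.
by rewrite (negPf ba) mul0r.
Qed.

Section Lap.
Variables (R : realType) (n : nat) (Phi : 'M[R]_n).
Hypothesis Hsym : Phi^T = Phi.
Hypothesis Hnn : forall i j, 0 <= Phi i j.
Hypothesis Hdiag : forall i, Phi i i = 0.
Hypothesis Hconn : connected_graph Phi.

Local Notation d i := (\sum_j Phi i j).
Local Notation L := (laplacian Phi).
Local Notation J := (const_mx 1 : 'M[R]_n).

Lemma Phis a b : Phi a b = Phi b a.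
Proof. by have := congr1 (fun M : 'M_n => M b a) Hsym; rewrite mxE. Qed.

Lemma LE a b : L a b = (a == b)%:R * d a - Phi a b.
Proof. by rewrite /laplacian /degmx !mxE mulr_natl. Qed.

Lemma dsym b : \sum_a Phi a b = d b.
Proof. by apply: eq_bigr => a _; rewrite Phis. Qed.

Lemma Lsym : L^T = L.
Proof.
apply/matrixP => a b; rewrite mxE !LE Phis; case: (eqVneq a b) => [->//|ab].
by rewrite !mul0r.
Qed.

Lemma rowsumL a : \sum_b L a b = 0.
Proof.
under eq_bigr do rewrite LE.
by rewrite sumrB sum_delta subrr.
Qed.

Lemma colsumL b : \sum_a L a b = 0.
Proof.
transitivity (\sum_a L b a); last exact: rowsumL. apply: eq_bigr => a _.
by rewrite -{1}Lsym mxE.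
Qed.

Lemma LJ : L *m J = 0.
Proof.
apply/matrixP => a b; rewrite !mxE; under eq_bigr do rewrite [const_mx _ _ _]mxE mulr1.
exact: rowsumL.
Qed.

Lemma JL : J *m L = 0.
Proof.
apply/matrixP => a b; rewrite !mxE; under eq_bigr do rewrite [const_mx _ _ _]mxE mul1r.
exact: colsumL.
Qed.

Lemma JJ : J *m J = n%:R *: J.
Proof.
apply/matrixP => a b; rewrite !mxE; under eq_bigr do rewrite !mxE mulr1.
by rewrite sumr_const card_ord mulr1.
Qed.

Lemma kerL (v : 'rV[R]_n) : v *m L = 0 -> forall a b, v 0 a = v 0 b.
Proof.
move=> vL.
have hv b : d b * v 0 b = \sum_a Phi b a * v 0 a.
  have := congr1 (fun M : 'rV_n => M 0 b) vL; rewrite !mxE.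
  under eq_bigr do rewrite LE mulrBr.
  rewrite sumrB.
  under eq_bigr do rewrite mulrCA.
  rewrite sum_delta' => /eqP; rewrite subr_eq0 => /eqP H.
  rewrite mulrC H; apply: eq_bigr => a _; by rewrite Phis mulrC.
have pa a : \sum_b Phi a b * (v 0 a - v 0 b) ^+ 2 =
   - (d a * v 0 a ^+ 2) + \sum_b Phi a b * v 0 b ^+ 2.
  transitivity (\sum_b (Phi a b * v 0 a ^+ 2 - 2%:R * v 0 a * (Phi a b * v 0 b)
     + Phi a b * v 0 b ^+ 2)).
    by apply: eq_bigr => b _; ring.
  rewrite big_split sumrB /= -mulr_suml -mulr_sumr -hv; ring.
have Q0 : \sum_a \sum_b Phi a b * (v 0 a - v 0 b) ^+ 2 = 0.
  under eq_bigr do rewrite pa.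
  rewrite big_split /= sumrN exchange_big /=.
  under [X in _ + X]eq_bigr do rewrite -mulr_suml dsym.
  by rewrite addNr.
have Hz a b : 0 < Phi a b -> v 0 a = v 0 b.
  move=> hab.
  have ge0 x : 0 <= \sum_b Phi x b * (v 0 x - v 0 b) ^+ 2.
    by apply: sumr_ge0 => y _; apply: mulr_ge0 => //; apply: sqr_ge0.
  have h1 := psumr_eq0P (fun x _ => ge0 x) Q0.
  have h2 := psumr_eq0P (fun y _ => mulr_ge0 (Hnn a y) (sqr_ge0 (v 0 a - v 0 y))) (h1 a isT).
  have := h2 b isT.
  move/eqP; rewrite mulf_eq0 (gt_eqF hab) /= sqrf_eq0 subr_eq0 => /eqP //.
move=> a b.
have cl : closed_mem (Defs.adjacent Phi) (mem [pred z | v 0 z == v 0 a]).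
  by move=> x y /Hz; rewrite !inE => ->.
have := closed_connect cl (Hconn a b); rewrite !inE eqxx => /esym /eqP.
by move=> ->.
Qed.

Hypothesis Hn : (0 < n)%N.
Local Notation A := (L + n%:R^-1 *: J).
Local Notation E := (1%:M - n%:R^-1 *: J).
Definition Mpl := invmx A - n%:R^-1 *: J.
Local Notation M := Mpl.

Lemma nV : n%:R^-1 * (n%:R : R) = 1.
Proof. by rewrite mulVf // pnatr_eq0 -lt0n. Qed.

Lemma A_unit : A \in unitmx.
Proof.
rewrite -row_free_unit; apply: inj_row_free => v vA.
have e1 : v *m L + n%:R^-1 *: (v *m J) = 0 by rewrite -vA (mulmxDr v L) scalemxAr.
have vJ0 : v *m J = 0.
  have := congr1 (mulmx^~ J) e1.
  by rewrite mul0mx mulmxDl -mulmxA LJ mulmx0 add0r -scalemxAl -mulmxA JJ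
    -scalemxAr scalerA nV scale1r.
have vL0 : v *m L = 0 by move: e1; rewrite vJ0 scaler0 addr0.
have hc := kerL vL0.
apply/matrixP => i k; rewrite (ord1 i) [RHS]mxE.
have := congr1 (fun M : 'rV_n => M 0 k) vJ0; rewrite !mxE.
under eq_bigr do rewrite [const_mx _ _ _]mxE mulr1 (hc _ k).
rewrite sumr_const card_ord => /eqP; rewrite mulrn_eq0 => /orP[n0|/eqP //].
by move: Hn; rewrite lt0n n0.
Qed.

Lemma AJ : A *m J = J.
Proof. by rewrite mulmxDl LJ add0r -scalemxAl JJ scalerA nV scale1r. Qed.
Lemma JA : J *m A = J.
Proof. by rewrite mulmxDr JL add0r -scalemxAr JJ scalerA nV scale1r. Qed.
Lemma iAJ : invmx A *m J = J.
Proof. by have := congr1 (mulmx (invmx A)) AJ; rewrite mulKmx ?A_unit // => /esym. Qed.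
Lemma JiA : J *m invmx A = J.
Proof. by have := congr1 (mulmx^~ (invmx A)) JA; rewrite /= mulmxK ?A_unit // => /esym. Qed.

Lemma LM : L *m M = E.
Proof.
have LA : L = A - n%:R^-1 *: J by rewrite addrK.
rewrite mulmxBr -scalemxAr LJ scaler0 subr0 {1}LA mulmxBl mulmxV ?A_unit //.
by rewrite -scalemxAl JiA.
Qed.

Lemma ML : M *m L = E.
Proof.
have LA : L = A - n%:R^-1 *: J by rewrite addrK.
rewrite mulmxBl -scalemxAl JL scaler0 subr0 {2}LA mulmxBr mulVmx ?A_unit //.
by rewrite -scalemxAr iAJ.
Qed.

Lemma Msym : M^T = M.
Proof.
by rewrite /Mpl linearB /= trmx_inv linearD /= Lsym !linearZ /= trmx_const.
Qed.

Lemma JM : J *m M = 0.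
Proof. by rewrite mulmxBr JiA -scalemxAr JJ scalerA nV scale1r subrr. Qed.
Lemma MJ : M *m J = 0.
Proof. by rewrite mulmxBl iAJ -scalemxAl JJ scalerA nV scale1r subrr. Qed.

Lemma Esym : E^T = E.
Proof. by rewrite linearB /= trmx1 linearZ /= trmx_const. Qed.

Lemma MLM : M *m L *m M = M.
Proof. by rewrite ML mulmxBl mul1mx -scalemxAl JM scaler0 subr0. Qed.

Lemma MP_L : is_MP_inverse L M.
Proof.
split.
- by rewrite LM mulmxBl mul1mx -scalemxAl JL scaler0 subr0.
- exact: MLM.
- by rewrite LM Esym.
- by rewrite ML Esym.
Qed.

Lemma MP_F m (F : 'M[R]_(n, m)) : F *m F^T = L -> J *m F = 0 ->
  is_MP_inverse F (F^T *m M).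
Proof.
move=> FF JF; split.
- by rewrite mulmxA FF LM mulmxBl mul1mx -scalemxAl JF scaler0 subr0.
- by rewrite !mulmxA -[F^T *m M *m F *m F^T]mulmxA FF -!mulmxA
    [M *m (L *m M)]mulmxA MLM.
- by rewrite mulmxA FF LM Esym.
- by rewrite !trmx_mul trmxK Msym mulmxA.
Qed.

Hypothesis Hd : forall i, 0 < d i.
Local Notation dv := (\col_i d i).
Local Notation one := (const_mx 1 : 'cV[R]_n).

Lemma volE : vol Phi = \sum_i d i.
Proof. by rewrite /vol /degmx mxtrace_diag; apply: eq_bigr => i _; rewrite mxE. Qed.

Lemma Lone : L *m one = 0.
Proof.
apply/matrixP => a b; rewrite !mxE; under eq_bigr do rewrite [const_mx _ _ _]mxE mulr1.
exact: rowsumL.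
Qed.

Definition hv (j : 'I_n) : 'cV[R]_n :=
  M *m dv - ((M *m dv) j 0 - vol Phi * M j j) *: one - vol Phi *: col j M.

Lemma hvE j i : hv j i 0 =
  (M *m dv) i 0 - (M *m dv) j 0 + vol Phi * (M j j - M i j).
Proof. rewrite /hv !mxE; ring. Qed.

Lemma hvjj j : hv j j 0 = 0.
Proof. by rewrite hvE !subrr mulr0 addr0. Qed.

Lemma Lh j i : i != j -> (L *m hv j) i 0 = d i.
Proof.
move=> ij.
rewrite /hv (mulmxBr L) (mulmxBr L) -!scalemxAr Lone scaler0 subr0 mulmxA LM.
rewrite (colE j M) mulmxA LM -colE !mxE (negPf ij) mulr0n sub0r.
under eq_bigr do rewrite !mxE mulrBl.
rewrite sumrB sum_delta -mulr_sumr -volE; ring.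
Qed.

Lemma transE a b : transmx Phi a b = Phi a b / d a.
Proof.
set Dinv := diag_mx (\row_i (d i)^-1).
have DD : degmx Phi *m Dinv = 1%:M.
  rewrite /degmx mulmx_diag; apply/matrixP => x y; rewrite !mxE divff //.
  by rewrite gt_eqF.
have iD : invmx (degmx Phi) = Dinv.
  have [uD _] := mulmx1_unit DD.
  by rewrite -[RHS](mulKmx uD) DD mulmx1.
by rewrite /transmx iD mul_diag_mx !mxE mulrC.
Qed.

Definition Qm (j : 'I_n) : 'M[R]_n :=
  \matrix_(a, b) if b == j then 0 else transmx Phi a b.

Lemma Qm_ge0 j a b : 0 <= Qm j a b.
Proof.
rewrite mxE; case: ifP => // _; rewrite transE; apply: divr_ge0 => //.
exact: ltW.
Qed.

Lemma Qm_j j a : Qm j a j = 0.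
Proof. by rewrite mxE eqxx. Qed.

Lemma Qm_hv j i : (Qm j *m hv j) i 0 = (\sum_b Phi i b * hv j b 0) / d i.
Proof.
rewrite mxE mulr_suml; apply: eq_bigr => b _; rewrite mxE.
case: eqP => [->|_]; first by rewrite hvjj !(mulr0, mul0r).
by rewrite transE mulrAC.
Qed.

Lemma hv_eq j i : i != j -> hv j i 0 = 1 + (Qm j *m hv j) i 0.
Proof.
move=> ij; have := Lh ij; rewrite mxE.
under eq_bigr do rewrite LE mulrBl -mulrA.
rewrite sumrB sum_delta Qm_hv => H.
have -> : \sum_b Phi i b * hv j b 0 = d i * hv j i 0 - d i by rewrite -[X in _ - X]H; ring.
have := Hd i; rewrite lt0r => /andP[di _]; field.
exact: di.
Qed.

Lemma hv_ge0 j a : 0 <= hv j a 0.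
Proof.
case: (@arg_minP _ R _ j predT (fun x => hv j x 0) isT) => m _ Hm.
rewrite leNgt; apply/negP => ha.
have hm : hv j m 0 < 0 := le_lt_trans (Hm a isT) ha.
have mj : m != j by apply: contraTneq hm => ->; rewrite hvjj ltxx.
have e := hv_eq mj.
have s1 : \sum_b Qm j m b <= 1.
  apply: (@le_trans _ _ (\sum_b Phi m b / d m)).
    apply: ler_sum => b _; rewrite mxE; case: ifP => _; last by rewrite transE.
    by apply: divr_ge0 => //; apply: ltW.
  by rewrite -mulr_suml divff // gt_eqF.
have s0 : 0 <= \sum_b Qm j m b by apply: sumr_ge0 => b _; apply: Qm_ge0.
have lb : hv j m 0 * \sum_b Qm j m b <= (Qm j *m hv j) m 0.
  rewrite [X in _ <= X]mxE mulr_sumr; apply: ler_sum => b _; rewrite mulrC.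
  by apply: ler_wpM2l; [apply: Qm_ge0 | apply: Hm].
nra.
Qed.

Lemma hitE j i : i != j -> hitting_time (transmx Phi) i j = (hv j i 0)%:E.
Proof.
move=> ij; rewrite /hitting_time /hit_tail (negPf ij).
exact: (@hit_series R n (Qm j) j (hv j) (@Qm_ge0 j) (@Qm_j j) (@hv_ge0 j) (@hv_eq j) i ij).
Qed.

Lemma hitjj j : hitting_time (transmx Phi) j j = 0%E.
Proof. by rewrite /hitting_time /hit_tail eqxx; apply: eseries0. Qed.

Lemma Ms a b : M a b = M b a.
Proof. by have := congr1 (fun X : 'M_n => X b a) Msym; rewrite mxE. Qed.

Lemma commuteE a b : commute_mx Phi a b = vol Phi * (M a a + M b b - 2%:R * M a b).
Proof.
rewrite mxE; case: (eqVneq a b) => [<-|ab].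
  by rewrite hitjj /=; ring.
rewrite hitE // hitE 1?eq_sym // /= !hvE (Ms b a); ring.
Qed.

Lemma colM0 b : \sum_a M a b = 0.
Proof.
have := congr1 (fun X : 'M_n => X b b) JM; rewrite [LHS]mxE [RHS]mxE.
by under eq_bigr do rewrite [const_mx _ _ _]mxE mul1r.
Qed.
End Lap.

Lemma sum_if2 (R : realType) n (j k : 'I_n) (x y : R) (G : 'I_n -> R) : j != k ->
  \sum_a (if a == j then x else if a == k then y else 0) * G a = x * G j + y * G k.
Proof.
move=> jk; rewrite (bigD1 j) //= eqxx (bigD1 k) 1?eq_sym //=.
rewrite (negPf jk) eqxx big1 ?addr0 // => a /andP[aj ak].
by rewrite (negPf aj) (negPf ak) mul0r.
Qed.

Lemma row_calc (R : realType) n m (F : 'M[R]_(n, m)) (M : 'M[R]_n) c j k s :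
  j != k -> (forall a, F a c = if a == j then s else if a == k then - s else 0) ->
  (forall a b, M a b = M b a) ->
  (row c (F^T *m M))^T = s *: (col j M - col k M).
Proof.
move=> jk Fc Ms; apply/matrixP => i z; rewrite (ord1 z) !mxE.
under eq_bigr do rewrite mxE Fc.
by rewrite sum_if2 // (Ms j i) (Ms k i); ring.
Qed.

Lemma final_calc (R : realType) n (M C : 'M[R]_n) (vol s : R) (j k : 'I_n) :
  (0 < n)%N -> vol != 0 -> (forall a b, M a b = M b a) ->
  (forall b, \sum_a M a b = 0) ->
  (forall a b, C a b = vol * (M a a + M b b - 2 * M a b)) ->
  s *: (col j M - col k M) =
  (s / (2 * vol)) *: ((1%:M - (n%:R)^-1 *: const_mx 1) *m (col k C - col j C)).
Proof.
move=> Hn vol0 Ms cs CE; apply/matrixP => i z; rewrite (ord1 z) !mxE.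
set w := fun a => C a k - C a j.
have sw : \sum_a (1%:M - (n%:R)^-1 *: const_mx 1 : 'M[R]_n) i a * (col k C - col j C) a 0
    = w i - n%:R^-1 * \sum_a w a.
  under eq_bigr do rewrite !mxE mulrBl mulr1.
  by rewrite sumrB sum_delta -mulr_sumr.
rewrite sw.
have sumw : \sum_a w a = vol * (n%:R * (M k k - M j j)).
  transitivity (\sum_a (vol * (M k k - M j j) + (- (2 * vol)) * M a k + (2 * vol) * M a j)).
    by apply: eq_bigr => a _; rewrite /w !CE; ring.
  rewrite !big_split /= -!mulr_sumr !cs sumr_const card_ord; rewrite -mulr_natr; ring.
rewrite sumw /w !CE.
have n0 : (n%:R : R) != 0 by rewrite pnatr_eq0 -lt0n.
field.
by rewrite n0 vol0.
Qed.

Section Edges.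
Variables (R : realType) (n : nat) (Phi : 'M[R]_n).
Hypothesis Hsym : Phi^T = Phi.
Hypothesis Hnn : forall i j, 0 <= Phi i j.
Hypothesis Hdiag : forall i, Phi i i = 0.

Local Notation d i := (\sum_j Phi i j).

Lemma Phis' a b : Phi a b = Phi b a.
Proof. by have := congr1 (fun M : 'M_n => M b a) Hsym; rewrite mxE. Qed.

Definition ES : {set 'I_n * 'I_n} :=
  [set p : 'I_n * 'I_n | (p.1 < p.2)%N && (0 < Phi p.1 p.2)].
Definition ee (c : 'I_#|ES|) : 'I_n * 'I_n := enum_val c.
Definition sq (p : 'I_n * 'I_n) := Num.sqrt (Phi p.1 p.2).
Definition fv (a : 'I_n) (p : 'I_n * 'I_n) : R :=
  if a == p.1 then sq p else if a == p.2 then - sq p else 0.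
Definition FF : 'M[R]_(n, #|ES|) := \matrix_(i, c) fv i (ee c).

Lemma ee_in c : ee c \in ES.
Proof. exact: enum_valP. Qed.

Lemma ee_lt c : ((ee c).1 < (ee c).2)%N.
Proof. by have := ee_in c; rewrite inE => /andP[]. Qed.

Lemma ee_pos c : 0 < Phi (ee c).1 (ee c).2.
Proof. by have := ee_in c; rewrite inE => /andP[]. Qed.

Lemma ee_neq c : (ee c).1 != (ee c).2.
Proof. by rewrite -(inj_eq val_inj) neq_ltn ee_lt. Qed.

Lemma ee_enum : edge_enum Phi ee.
Proof.
split; first exact: ee_pos.
move=> j k hjk.
have jk : j != k by apply: contraTneq hjk => ->; rewrite Hdiag ltxx.
have uniq c c' : ee c = ee c' -> c = c' by move/enum_val_inj.
case: (ltngtP j k) => [lt|gt|eq]; last by move: jk; rewrite (val_inj eq) eqxx.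
- have inS : (j, k) \in ES by rewrite inE lt hjk.
  exists (enum_rank_in inS (j, k)); split.
    by left; rewrite /ee enum_rankK_in.
  move=> c [ec|ec]; apply: uniq; rewrite /ee enum_rankK_in // -/(ee c) ec //.
  by have := ee_lt c; rewrite ec /= ltnNge ltnW.
- have inS : (k, j) \in ES by rewrite inE gt Phis'.
  exists (enum_rank_in inS (k, j)); split.
    by right; rewrite /ee enum_rankK_in.
  move=> c [ec|ec]; apply: uniq; rewrite /ee enum_rankK_in // -/(ee c) ec //.
  by have := ee_lt c; rewrite ec /= ltnNge ltnW.
Qed.

Lemma FF_oriented : oriented_incidence Phi ee FF.
Proof. by split; [exact: ee_enum | move=> i c; rewrite mxE]. Qed.

Lemma JF : (const_mx 1 : 'M[R]_n) *m FF = 0.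
Proof.
apply/matrixP => a c; rewrite !mxE.
under eq_bigr do rewrite [const_mx _ _ _]mxE mul1r mxE.
transitivity (\sum_a (if a == (ee c).1 then sq (ee c) else if a == (ee c).2 then - sq (ee c) else 0) * 1).
  by apply: eq_bigr => i _; rewrite mulr1.
by rewrite sum_if2 ?ee_neq // !mulr1 addrN.
Qed.

Lemma LE' a b : laplacian Phi a b = (a == b)%:R * d a - Phi a b.
Proof. by rewrite /laplacian /degmx !mxE mulr_natl. Qed.

Lemma fvE a p : p.1 != p.2 -> fv a p = sq p * ((a == p.1)%:R - (a == p.2)%:R).
Proof.
move=> neq; rewrite /fv; case: ifP => [/eqP ->|a1].
  by rewrite (negPf neq) subr0 mulr1.
case: ifP => [_|a2]; first by rewrite sub0r mulrN1.
by rewrite subrr mulr0.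
Qed.

Lemma dd (a b y : 'I_n) : ((a == y)%:R * (b == y)%:R : R) = (b == a)%:R * (a == y)%:R.
Proof.
by case: (eqVneq a y) => [<-|ay]; [rewrite mul1r mulr1 | rewrite mul0r mulr0].
Qed.

Lemma FFt : FF *m FF^T = laplacian Phi.
Proof.
apply/matrixP => a b; rewrite [LHS]mxE LE'.
under eq_bigr do rewrite !mxE.
rewrite /ee -(big_enum_val (fun p => fv a p * fv b p)).
pose G (p : 'I_n * 'I_n) := Phi p.1 p.2 *
   (((a == p.1)%:R - (a == p.2)%:R) * ((b == p.1)%:R - (b == p.2)%:R)).
have st2 : \sum_(p in ES) fv a p * fv b p =
    \sum_(p : 'I_n * 'I_n) (if (p.1 < p.2)%N then G p else 0).
  rewrite big_mkcond; apply: eq_bigr => p _; rewrite inE.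
  case: (ltnP p.1 p.2) => lt /=; last by [].
  have neq : p.1 != p.2 by rewrite -(inj_eq val_inj) neq_ltn lt.
  rewrite !fvE // /G /sq.
  case: (ltrP 0 (Phi p.1 p.2)) => hp /=.
    by rewrite mulrACA -expr2 sqr_sqrtr // ltW.
  have -> : Phi p.1 p.2 = 0 by apply/eqP; rewrite eq_le hp Hnn.
  by rewrite mul0r.
rewrite st2.
set X := \sum_(p : 'I_n * 'I_n) (if (p.1 < p.2)%N then G p else 0).
have swinj : injective (fun p : 'I_n * 'I_n => (p.2, p.1)).
  by apply: (can_inj (g := fun p : 'I_n * 'I_n => (p.2, p.1))) => -[].
have T2 : \sum_p G p = X + X.
  have -> : \sum_p G p = X + \sum_(p : 'I_n * 'I_n) (if (p.2 < p.1)%N then G p else 0).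
    rewrite /X -big_split /=; apply: eq_bigr => p _.
    case: (ltngtP p.1 p.2) => [lt|gt|eq].
    - by rewrite addr0.
    - by rewrite add0r.
    - by rewrite /G (val_inj eq) subrr mul0r mulr0 addr0.
  congr (_ + _); rewrite [LHS](reindex_inj swinj) /=.
  apply: eq_bigr => p _; case: ifP => // _.
  rewrite /G /= Phis'; ring.
have inner x : \sum_y Phi x y * (((a == x)%:R - (a == y)%:R) * ((b == x)%:R - (b == y)%:R))
   = (a == x)%:R * (b == x)%:R * d x - (a == x)%:R * Phi x b
     - (b == x)%:R * Phi x a + (b == a)%:R * Phi x a.
  transitivity (\sum_y ((a == x)%:R * (b == x)%:R * Phi x y
     - (a == x)%:R * ((b == y)%:R * Phi x y) - (b == x)%:R * ((a == y)%:R * Phi x y)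
     + (b == a)%:R * ((a == y)%:R * Phi x y))).
    apply: eq_bigr => y _.
    have e : Phi x y * (((a == x)%:R - (a == y)%:R) * ((b == x)%:R - (b == y)%:R)) =
      (a == x)%:R * (b == x)%:R * Phi x y
     - (a == x)%:R * ((b == y)%:R * Phi x y) - (b == x)%:R * ((a == y)%:R * Phi x y)
     + ((a == y)%:R * (b == y)%:R) * Phi x y by ring.
    by rewrite e (dd a b y); ring.
  by rewrite !big_split /= !sumrN -!mulr_sumr !sum_delta.
have T4 : \sum_p G p = 2%:R * ((a == b)%:R * d a - Phi a b).
  rewrite -(pair_bigA _ (fun x y => G (x, y))) /G /=.
  under eq_bigr do rewrite inner.
  transitivity (\sum_x ((b == a)%:R * ((a == x)%:R * d x) - (a == x)%:R * Phi x b
     - (b == x)%:R * Phi x a + (b == a)%:R * Phi x a)).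
    by apply: eq_bigr => x _; rewrite mulrA -dd.
  rewrite !big_split /= !sumrN -!mulr_sumr !sum_delta.
  have dsa : \sum_i Phi i a = d a by apply: eq_bigr => i _; rewrite Phis'.
  rewrite dsa (Phis' b a) (eq_sym b a); ring.
have : X + X = 2%:R * ((a == b)%:R * d a - Phi a b) by rewrite -T2.
move=> h; apply: (@mulfI _ 2%:R); first by rewrite pnatr_eq0.
by rewrite -h mulr2n mulrDl !mul1r.
Qed.
End Edges.

Local Close Scope classical_set_scope.

Theorem lemma3p1 (R : realType) (n : nat) (Phi : 'M[R]_n) :
  Phi^T = Phi ->
  (forall i j, 0 <= Phi i j) ->
  (forall i, Phi i i = 0) ->
  connected_graph Phi ->
  exists (m : nat) (e : 'I_m -> 'I_n * 'I_n) (F : 'M[R]_(n, m)),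
    oriented_incidence Phi e F /\
    forall c : 'I_m,
      let j := (e c).1 in let k := (e c).2 in
      let Ld := mppinv (laplacian Phi) in
      let C := commute_mx Phi in
      (row c (mppinv F))^T = Num.sqrt (Phi j k) *: (col j Ld - col k Ld) /\
      Num.sqrt (Phi j k) *: (col j Ld - col k Ld) =
        (Num.sqrt (Phi j k) / (2 * vol Phi)) *:
          ((1%:M - (n%:R)^-1 *: const_mx 1) *m (col k C - col j C)).
Proof.
move=> Hsym Hnn Hdiag Hconn.
exists #|ES Phi|, (@ee R n Phi), (@FF R n Phi).
split; first by apply: FF_oriented.
move=> c; cbv zeta.
have jk := ee_neq c; have hjk := ee_pos c.
have Hn : (0 < n)%N := leq_ltn_trans (leq0n _) (ltn_ord (ee c).1).
have Hd : forall i, 0 < \sum_j Phi i j.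
  move=> i.
  have [x hx] : exists x, 0 < Phi i x.
    have [y [iy cy]] : exists y, i != y /\ connect (Defs.adjacent Phi) i y.
      case: (eqVneq i (ee c).1) => [->|ij].
        by exists (ee c).2; split => //; apply: Hconn.
      by exists (ee c).1; split => //; apply: Hconn.
    case/connectP: cy => p; case: p => [/= _ yi|x p /= /andP[ix _] _].
      by rewrite yi eqxx in iy.
    by exists x.
  rewrite (bigD1 x) //=; apply: (lt_le_trans hx); rewrite lerDl.
  by apply: sumr_ge0 => *; exact: Hnn.
have vol0 : vol Phi != 0.
  rewrite volE gt_eqF //; apply: (lt_le_trans (Hd (ee c).1)).
  rewrite [leRHS](bigD1 (ee c).1) //= lerDl; apply: sumr_ge0 => i _; apply: ltW; exact: Hd.
rewrite (mppinvE (MP_L Hsym Hnn Hconn Hn)).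
rewrite (mppinvE (MP_F Hsym Hnn Hconn Hn (FFt Hsym Hnn) (JF Phi))).
split.
- apply: row_calc => //; last exact: (Ms Hsym).
  by move=> a; rewrite mxE.
- apply: final_calc => //; first exact: (Ms Hsym).
    exact: (colM0 Hsym Hnn Hconn Hn).
  by move=> a b; apply: (commuteE Hsym Hnn Hconn Hn Hd).
Qed.
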